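(* Let $n \in \mathbb{N}$, let $\mathbf{A}_1, \dots, \mathbf{A}_n$ and $\mathbf{B}$ be additive categories with cokernels, and let $F: \mathbf{A}_1 \times \dots \times \mathbf{A}_n \to \mathbf{B}$ be a multilinear functor. Then $F$ is right exact if and only if for every tuple of morphisms $(\alpha_i : b_i \to a_i)_{i=1,\dots,n}$ with $\alpha_i$ a morphism in $\mathbf{A}_i$, the sequence \[ \bigoplus_{j=1}^{n} F(a_1, \dots, a_{j-1}, b_j, a_{j+1}, \dots, a_n) \xrightarrow{\ \big(F(\mathrm{id}_{a_1}, \dots, \mathrm{id}_{a_{j-1}}, \alpha_j, \mathrm{id}_{a_{j+1}}, \dots, \mathrm{id}_{a_n})\big)_{j}\ } F(a_1, \dots, a_n) \longrightarrow F(\operatorname{cok}\alpha_1, \dots, \operatorname{cok}\alpha_n) \longrightarrow 0 \] is exact (where the middle morphism is $F$ applied to the cokernel projections), i.e. $F(a_1,\dots,a_n) \to F(\operatorname{cok}\alpha_1, \dots, \operatorname{cok}\alpha_n)$ is a cokernel of the first morphism.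
   Context: A functor $F: \mathbf{A}_1 \times \dots \times \mathbf{A}_n \to \mathbf{B}$ between additive categories is called multilinear if it is additive in each component separately. If all categories have cokernels, a multilinear $F$ is called right exact if it is componentwise right exact: for every $k \in \{1,\dots,n\}$, all objects $a_i \in \mathbf{A}_i$ ($i \neq k$) and every morphism $\alpha_k$ in $\mathbf{A}_k$, the natural morphism $\operatorname{cok}\big(F(a_1,\dots,a_{k-1},\alpha_k,a_{k+1},\dots,a_n)\big) \to F(a_1,\dots,a_{k-1},\operatorname{cok}(\alpha_k),a_{k+1},\dots,a_n)$ is an isomorphism. The first morphism of the sequence is the row whose $j$-th entry is $F$ applied to $\alpha_j$ in slot $j$ and to identities elsewhere. *)

(* Defs.v *)
From HB Require Import structures.
From mathcomp Require Import all_boot all_algebra.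
Set Implicit Arguments. Unset Strict Implicit. Unset Printing Implicit Defensive.
Import GRing.Theory.
Local Open Scope ring_scope.

(* An additive category with (chosen) cokernels.  Composition is written in
   diagrammatic order: [comp f g] is "first f, then g". *)
Record AddCat := {
  Ob : Type;
  Hom : Ob -> Ob -> zmodType;
  idm : forall a, Hom a a;
  comp : forall {a b c}, Hom a b -> Hom b c -> Hom a c;
  comp_id_l : forall a b (f : Hom a b), comp (idm a) f = f;
  comp_id_r : forall a b (f : Hom a b), comp f (idm b) = f;
  comp_assoc : forall a b c d (f : Hom a b) (g : Hom b c) (h : Hom c d),
      comp (comp f g) h = comp f (comp g h);
  comp_addl : forall a b c (f f' : Hom a b) (g : Hom b c),
      comp (f + f') g = comp f g + comp f' g;
  comp_addr : forall a b c (f : Hom a b) (g g' : Hom b c),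
      comp f (g + g') = comp f g + comp f g';
  zob : Ob;
  zob_init : forall a (f : Hom zob a), f = 0;
  zob_term : forall a (f : Hom a zob), f = 0;
  biprod : Ob -> Ob -> Ob;
  bp_inl : forall a b, Hom a (biprod a b);
  bp_inr : forall a b, Hom b (biprod a b);
  bp_outl : forall a b, Hom (biprod a b) a;
  bp_outr : forall a b, Hom (biprod a b) b;
  bp_ll : forall a b, comp (bp_inl a b) (bp_outl a b) = idm a;
  bp_rr : forall a b, comp (bp_inr a b) (bp_outr a b) = idm b;
  bp_lr : forall a b, comp (bp_inl a b) (bp_outr a b) = 0;
  bp_rl : forall a b, comp (bp_inr a b) (bp_outl a b) = 0;
  bp_sum : forall a b, comp (bp_outl a b) (bp_inl a b)
                       + comp (bp_outr a b) (bp_inr a b) = idm (biprod a b);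
  cok : forall a b, Hom a b -> Ob;
  cokpi : forall a b (f : Hom a b), Hom b (cok f);
  cokdesc : forall a b (f : Hom a b) c, Hom b c -> Hom (cok f) c;
  cok_zero : forall a b (f : Hom a b), comp f (cokpi f) = 0;
  cok_fac : forall a b (f : Hom a b) c (g : Hom b c),
      comp f g = 0 -> comp (cokpi f) (cokdesc f g) = g;
  cok_epi : forall a b (f : Hom a b) c (h h' : Hom (cok f) c),
      comp (cokpi f) h = comp (cokpi f) h' -> h = h'
}.

Arguments Hom {C} : rename.
Arguments idm {C} : rename.
Arguments comp {C a b c} : rename.
Arguments zob {C} : rename.
Arguments biprod {C} : rename.
Arguments bp_inl {C} : rename.
Arguments bp_inr {C} : rename.
Arguments bp_outl {C} : rename.
Arguments bp_outr {C} : rename.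
Arguments cok {C a b} : rename.
Arguments cokpi {C a b} : rename.
Arguments cokdesc {C a b} f {c} : rename.

Section Basics.
Variable C : AddCat.

Definition is_iso (a b : Ob C) (u : Hom a b) : Prop :=
  exists v : Hom b a, comp u v = idm a /\ comp v u = idm b.

Definition is_cokernel (a b c : Ob C) (f : Hom a b) (g : Hom b c) : Prop :=
  comp f g = 0 /\
  forall d (h : Hom b d), comp f h = 0 ->
    exists u : Hom c d, comp g u = h /\
      forall u' : Hom c d, comp g u' = h -> u' = u.

Definition copair (a b t : Ob C) (f : Hom a t) (g : Hom b t)
  : Hom (biprod a b) t := comp (bp_outl a b) f + comp (bp_outr a b) g.

Definition dsum (I : Type) (o : I -> Ob C) (s : seq I) : Ob C :=
  foldr (fun j acc => biprod (o j) acc) zob s.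

Fixpoint rowmor (I : Type) (o : I -> Ob C) (t : Ob C)
    (f : forall j, Hom (o j) t) (s : seq I) : Hom (dsum o s) t :=
  match s return Hom (dsum o s) t with
  | [::] => 0
  | j :: s' => copair (f j) (rowmor f s')
  end.
End Basics.

Section Product.
Local Unset Implicit Arguments.
Variables (n : nat) (A : 'I_n -> AddCat).

Definition obfam := forall i : 'I_n, Ob (A i).
Definition homfam (x y : obfam) := forall i : 'I_n, Hom (x i) (y i).
Definition idfam (x : obfam) : homfam x x := fun i => idm (x i).

Definition upd (x : obfam) (k : 'I_n) (c : Ob (A k)) : obfam :=
  fun i => match k =P i with
           | ReflectT e => eq_rect k (fun j => Ob (A j)) c i e
           | ReflectF _ => x i
           end.

(* the family (id, ..., id, f, id, ..., id) : x[k:=c] -> x[k:=d], f in slot k *)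
Definition slotm (x : obfam) (k : 'I_n) (c d : Ob (A k)) (f : Hom c d)
  : homfam (upd x k c) (upd x k d) :=
  fun i =>
    match k =P i as r return
      Hom (match r with
           | ReflectT e => eq_rect k (fun j => Ob (A j)) c i e
           | ReflectF _ => x i end)
          (match r with
           | ReflectT e => eq_rect k (fun j => Ob (A j)) d i e
           | ReflectF _ => x i end) with
    | ReflectT e =>
        match e as e0 in _ = i0 return
          Hom (eq_rect k (fun j => Ob (A j)) c i0 e0)
              (eq_rect k (fun j => Ob (A j)) d i0 e0) with
        | erefl => f end
    | ReflectF _ => idm (x i)
    end.

(* (id, ..., id, f, id, ..., id) : x[k:=c] -> x, for f : c -> x_k *)
Definition slotin (x : obfam) (k : 'I_n) (c : Ob (A k)) (f : Hom c (x k))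
  : homfam (upd x k c) x :=
  fun i =>
    match k =P i as r return
      Hom (match r with
           | ReflectT e => eq_rect k (fun j => Ob (A j)) c i e
           | ReflectF _ => x i end) (x i) with
    | ReflectT e =>
        match e as e0 in _ = i0 return
          Hom (eq_rect k (fun j => Ob (A j)) c i0 e0) (x i0) with
        | erefl => f end
    | ReflectF _ => idm (x i)
    end.

(* (id, ..., id, f, id, ..., id) : x -> x[k:=d], for f : x_k -> d *)
Definition slotout (x : obfam) (k : 'I_n) (d : Ob (A k)) (f : Hom (x k) d)
  : homfam x (upd x k d) :=
  fun i =>
    match k =P i as r return
      Hom (x i) (match r with
           | ReflectT e => eq_rect k (fun j => Ob (A j)) d i e
           | ReflectF _ => x i end) with
    | ReflectT e =>
        match e as e0 in _ = i0 return
          Hom (x i0) (eq_rect k (fun j => Ob (A j)) d i0 e0) with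
        | erefl => f end
    | ReflectF _ => idm (x i)
    end.
End Product.
Arguments obfam {n} A.
Arguments homfam {n A} x y.
Arguments upd {n A} x k c i.
Arguments slotm {n A} x {k c d} f i.
Arguments slotin {n A x k c} f i.
Arguments slotout {n A} x {k d} f i.
Arguments idfam {n A} x i.

Record ProdFunctor (n : nat) (A : 'I_n -> AddCat) (B : AddCat) := {
  Fo : obfam A -> Ob B;
  Fm : forall x y : obfam A, homfam x y -> Hom (Fo x) (Fo y);
  Fm_id : forall x, Fm (idfam x) = idm (Fo x);
  Fm_comp : forall x y z (f : homfam x y) (g : homfam y z),
      Fm (fun i => comp (f i) (g i)) = comp (Fm f) (Fm g)
}.
Arguments Fo {n A B} F x : rename.
Arguments Fm {n A B} F {x y} f : rename.

Section FunctorProps.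
Variables (n : nat) (A : 'I_n -> AddCat) (B : AddCat) (F : ProdFunctor A B).

Definition multilinear : Prop :=
  forall (x : obfam A) (k : 'I_n) (c d : Ob (A k)) (f g : Hom c d),
    Fm F (slotm x (f + g)) = Fm F (slotm x f) + Fm F (slotm x g).

(* componentwise right exact: for every k, objects x_i (i != k) and every
   alpha : c -> x_k in A_k, the natural morphism
   cok F(.., alpha, ..) -> F(.., cok alpha, ..) is an isomorphism. *)
Definition right_exact : Prop :=
  forall (x : obfam A) (k : 'I_n) (c : Ob (A k)) (alpha : Hom c (x k)),
    is_iso (cokdesc (Fm F (slotin alpha))
                    (Fm F (slotout x (cokpi alpha)))).

Definition first_mor (a b : obfam A) (alpha : homfam b a) :=
  rowmor (fun j => Fm F (slotin (alpha j))) (enum 'I_n).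
End FunctorProps.

(* Main.v *)
Require Import Defs.
From HB Require Import structures.
From mathcomp Require Import all_boot all_algebra.
From Stdlib Require Import FunctionalExtensionality IndefiniteDescription.
Require Import Defs.
Set Implicit Arguments. Unset Strict Implicit. Unset Printing Implicit Defensive.
Import GRing.Theory.
Local Open Scope ring_scope.

Section CatLemmas.
Variable C : AddCat.

Lemma comp0l (a b c : Ob C) (g : Hom b c) : comp (0 : Hom a b) g = 0.
Proof. apply: (addrI (comp (0 : Hom a b) g)); by rewrite -comp_addl !addr0. Qed.
Lemma comp0r (a b c : Ob C) (f : Hom a b) : comp f (0 : Hom b c) = 0.
Proof. apply: (addrI (comp f (0 : Hom b c))); by rewrite -comp_addr !addr0. Qed.

Lemma iso_id (a : Ob C) : is_iso (idm a).
Proof. exists (idm a); by rewrite comp_id_l. Qed.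

Lemma iso_epi (a b c : Ob C) (u : Hom a b) (h h' : Hom b c) :
  is_iso u -> comp u h = comp u h' -> h = h'.
Proof.
case=> v [uv vu] E.
by rewrite -[h]comp_id_l -vu comp_assoc E -comp_assoc vu comp_id_l.
Qed.

Lemma iso_kill (a b c : Ob C) (u : Hom a b) (h : Hom b c) :
  is_iso u -> (comp u h = 0 <-> h = 0).
Proof.
move=> iu; split => [E|->]; last exact: comp0r.
by apply: (iso_epi iu); rewrite E comp0r.
Qed.

Definition epi (a b : Ob C) (g : Hom a b) :=
  forall d (u u' : Hom b d), comp g u = comp g u' -> u = u'.

Lemma epi_comp (a b c : Ob C) (f : Hom a b) (g : Hom b c) :
  epi f -> epi g -> epi (comp f g).
Proof. move=> ef eg d u u'; rewrite !comp_assoc => /ef; exact: eg. Qed.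

Lemma cok_epi' (a b c : Ob C) (f : Hom a b) (g : Hom b c) :
  is_cokernel f g -> epi g.
Proof.
case=> fg H d u u' E.
have [|w [_ Hw]] := H d (comp g u); first by rewrite -comp_assoc fg comp0l.
by rewrite (Hw u) // (Hw u') // E.
Qed.

Lemma cok_cokpi (a b : Ob C) (f : Hom a b) : is_cokernel f (cokpi f).
Proof.
split; first exact: cok_zero.
move=> d h fh; exists (cokdesc f h); split; first exact: cok_fac.
move=> u' E; apply: cok_epi; by rewrite E cok_fac.
Qed.

Lemma cok_zero_iso (a b : Ob C) : is_cokernel (0 : Hom a b) (idm b).
Proof.
split; first exact: comp0l.
move=> d h _; exists h; split; first exact: comp_id_l.
by move=> u'; rewrite comp_id_l.
Qed.

Lemma cok_post (a b c c' : Ob C) (f : Hom a b) (g : Hom b c) (p : Hom c c') :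
  is_cokernel f g -> is_iso p -> is_cokernel f (comp g p).
Proof.
case=> fg H [q [pq qp]]; split; first by rewrite -comp_assoc fg comp0l.
move=> d h fh; have [u [gu Hu]] := H d h fh.
exists (comp q u); split; first by rewrite comp_assoc -(comp_assoc p) pq comp_id_l.
move=> u' E; rewrite -(Hu (comp p u')); last by rewrite -comp_assoc.
by rewrite -comp_assoc qp comp_id_l.
Qed.

Lemma cok_same (a a' b c : Ob C) (f : Hom a b) (f' : Hom a' b) (g : Hom b c) :
  (forall d (h : Hom b d), comp f h = 0 <-> comp f' h = 0) ->
  is_cokernel f g -> is_cokernel f' g.
Proof.
move=> E [fg H]; split; first by apply/E.
by move=> d h /E; exact: H.
Qed.

Lemma cok_pre (a a' b c : Ob C) (p : Hom a' a) (f : Hom a b) (g : Hom b c) :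
  is_iso p -> is_cokernel f g -> is_cokernel (comp p f) g.
Proof.
move=> ip; apply: cok_same => d h; rewrite comp_assoc; split.
  by move=> ->; rewrite comp0r.
by move/(iso_kill _ ip).
Qed.

Lemma cok_of_iso (a b c : Ob C) (f : Hom a b) (g : Hom b c) :
  comp f g = 0 -> is_iso (cokdesc f g) -> is_cokernel f g.
Proof.
move=> fg [v [wv vw]].
have gE : g = comp (cokpi f) (cokdesc f g) by rewrite cok_fac.
rewrite gE; apply: cok_post; last by exists v.
exact: cok_cokpi.
Qed.

Lemma iso_of_cok (a b c : Ob C) (f : Hom a b) (g : Hom b c) :
  is_cokernel f g -> is_iso (cokdesc f g).
Proof.
move=> [fg H].
have [v [gv _]] := H _ (cokpi f) (cok_zero f).
exists v; split.
  apply: cok_epi; by rewrite -comp_assoc cok_fac // gv comp_id_r.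
have [u [_ Hu]] := H _ g fg.
rewrite (Hu (comp v (cokdesc f g))); last by rewrite -comp_assoc gv cok_fac.
by rewrite (Hu (idm c)) // comp_id_r.
Qed.

Lemma copair0 (a b t : Ob C) (f : Hom a t) (g : Hom b t) :
  copair f g = 0 <-> f = 0 /\ g = 0.
Proof.
split; last by case=> -> ->; rewrite /copair !comp0r addr0.
move=> E.
have Ef : comp (bp_inl a b) (copair f g) = f.
  by rewrite /copair comp_addr -!comp_assoc bp_ll bp_lr comp0l addr0 comp_id_l.
have Eg : comp (bp_inr a b) (copair f g) = g.
  by rewrite /copair comp_addr -!comp_assoc bp_rr bp_rl comp0l add0r comp_id_l.
by split; [rewrite -Ef | rewrite -Eg]; rewrite E comp0r.
Qed.

Lemma comp_copair (a b t d : Ob C) (f : Hom a t) (g : Hom b t) (h : Hom t d) :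
  comp (copair f g) h = copair (comp f h) (comp g h).
Proof. by rewrite /copair comp_addl !comp_assoc. Qed.

Lemma rowmor0 (I : eqType) (o : I -> Ob C) (t d : Ob C) (f : forall j, Hom (o j) t)
  (s : seq I) (h : Hom t d) :
  comp (rowmor f s) h = 0 <-> (forall j, j \in s -> comp (f j) h = 0).
Proof.
elim: s => [|j s IH] /=; first by split=> // _; rewrite comp0l.
rewrite comp_copair copair0 IH; split.
  by case=> H1 H2 i; rewrite inE => /orP [/eqP -> //|]; exact: H2.
move=> H; split; first by apply: H; rewrite inE eqxx.
by move=> i iS; apply: H; rewrite inE iS orbT.
Qed.
End CatLemmas.

Section FunLemmas.
Variables (n : nat) (A : 'I_n -> AddCat) (B : AddCat) (F : ProdFunctor A B).

Lemma Fm_ext (x y : obfam A) (f g : homfam x y) : (forall i, f i = g i) -> Fm F f = Fm F g.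
Proof. by move=> E; rewrite (functional_extensionality_dep f g E). Qed.

Lemma Fm_compE (x y z : obfam A) (f : homfam x y) (g : homfam y z) (h : homfam x z) :
  (forall i, h i = comp (f i) (g i)) -> Fm F h = comp (Fm F f) (Fm F g).
Proof. move=> E; rewrite -Fm_comp; exact: Fm_ext. Qed.

Lemma famiso (x y : obfam A) (f : homfam x y) : (forall i, is_iso (f i)) -> is_iso (Fm F f).
Proof.
move=> H.
pose v : homfam y x := fun i => proj1_sig (constructive_indefinite_description _ (H i)).
have Hv i : comp (f i) (v i) = idm (x i) /\ comp (v i) (f i) = idm (y i).
  by rewrite /v; case: (constructive_indefinite_description _ _).
exists (Fm F v); split.
- rewrite -Fm_comp -(Fm_id F x); apply: Fm_ext => i; by case: (Hv i).
- rewrite -Fm_comp -(Fm_id F y); apply: Fm_ext => i; by case: (Hv i).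
Qed.

Definition phi (u v : obfam A) (k : 'I_n) (d : Ob (A k)) (w : Hom (u k) d) (g : homfam u v)
  : homfam u (upd v k d) :=
  fun i => match k =P i as r return
      Hom (u i) (match r with
                 | ReflectT e => eq_rect k (fun j => Ob (A j)) d i e
                 | ReflectF _ => v i end) with
   | ReflectT e => match e as e0 in _ = i0 return
        Hom (u i0) (eq_rect k (fun j => Ob (A j)) d i0 e0) with erefl => w end
   | ReflectF _ => g i
   end.

Definition psi (u v : obfam A) (k : 'I_n) (d : Ob (A k)) (w : Hom d (v k)) (g : homfam u v)
  : homfam (upd u k d) v :=
  fun i => match k =P i as r return
      Hom (match r with
           | ReflectT e => eq_rect k (fun j => Ob (A j)) d i e
           | ReflectF _ => u i end) (v i) with
   | ReflectT e => match e as e0 in _ = i0 return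
        Hom (eq_rect k (fun j => Ob (A j)) d i0 e0) (v i0) with erefl => w end
   | ReflectF _ => g i
   end.

Lemma D_pre (y x : obfam A) (f : homfam y x) k i :
  f i = comp (phi (idm (y k)) f i) (slotin (f k) i).
Proof.
rewrite /phi /slotin /upd; case: (k =P i) => [e|ne].
  by case: i / e => /=; rewrite comp_id_l.
by rewrite comp_id_r.
Qed.

Lemma D_post (x z : obfam A) (g : homfam x z) k (d : Ob (A k)) (p : Hom (x k) d)
  (w : Hom d (z k)) i : comp p w = g k -> g i = comp (slotout x p i) (psi w g i).
Proof.
move=> E; rewrite /psi /slotout /upd; case: (k =P i) => [e|ne].
  by case: i / e => /=.
by rewrite comp_id_l.
Qed.

Lemma D_m (u v : obfam A) (f : homfam u v) k i :
  f i = comp (phi (idm (u k)) f i) (comp (slotm v (f k) i) (psi (idm (v k)) (idfam v) i)).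
Proof.
rewrite /phi /psi /slotm /idfam /upd; case: (k =P i) => [e|ne].
  by case: i / e => /=; rewrite comp_id_l comp_id_r.
by rewrite !comp_id_r.
Qed.

Lemma phi_iso (u v : obfam A) k (d : Ob (A k)) (w : Hom (u k) d) (g : homfam u v) i :
  is_iso w -> (forall i, i != k -> is_iso (g i)) -> is_iso (phi w g i).
Proof.
move=> iw ig; rewrite /phi /upd; case: (k =P i) => [e|ne].
  by case: i / e.
by apply: ig; apply/eqP => E; apply: ne; rewrite E.
Qed.

Lemma psi_iso (u v : obfam A) k (d : Ob (A k)) (w : Hom d (v k)) (g : homfam u v) i :
  is_iso w -> (forall i, i != k -> is_iso (g i)) -> is_iso (psi w g i).
Proof.
move=> iw ig; rewrite /psi /upd; case: (k =P i) => [e|ne].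
  by case: i / e.
by apply: ig; apply/eqP => E; apply: ne; rewrite E.
Qed.

Hypothesis HF : multilinear F.

Lemma Fm_slotm0 (x : obfam A) k (c d : Ob (A k)) : Fm F (slotm x (0 : Hom c d)) = 0.
Proof. apply: (addrI (Fm F (slotm x (0 : Hom c d)))); by rewrite -HF !addr0. Qed.

Lemma Fm_zero (u v : obfam A) (f : homfam u v) k : f k = 0 -> Fm F f = 0.
Proof.
move=> fk0.
rewrite (Fm_compE (f := phi (idm (u k)) f)
   (g := fun i => comp (slotm v (f k) i) (psi (idm (v k)) (idfam v) i))); last exact: D_m.
rewrite (Fm_compE (f := slotm v (f k)) (g := psi (idm (v k)) (idfam v))
   (h := fun i => comp (slotm v (f k) i) (psi (idm (v k)) (idfam v) i))) //.
have -> : Fm F (slotm v (f k)) = 0 by rewrite fk0; exact: Fm_slotm0.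
by rewrite comp0l comp0r.
Qed.

End FunLemmas.
Arguments Fm_compE {n A B F x y z f g h}.

Section Forward.
Variables (n : nat) (A : 'I_n -> AddCat) (B : AddCat) (F : ProdFunctor A B).
Hypothesis HF : multilinear F.
Hypothesis HRE : right_exact F.

Lemma RE_gen (y x z : obfam A) (f : homfam y x) (g : homfam x z) k :
  is_cokernel (f k) (g k) -> (forall i, i != k -> is_iso (f i) /\ is_iso (g i)) ->
  is_cokernel (Fm F f) (Fm F g).
Proof.
move=> Hk Hi.
have [fg0 _] := Hk.
rewrite (Fm_compE (f := phi (idm (y k)) f) (g := slotin (f k))); last exact: D_pre.
rewrite (Fm_compE (f := slotout x (cokpi (f k))) (g := psi (cokdesc (f k) (g k)) g));
  last by move=> i; apply: D_post; exact: cok_fac.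
apply: cok_post; last first.
  apply: famiso => i; apply: psi_iso; first exact: iso_of_cok.
  by move=> j /Hi [].
apply: cok_pre.
  apply: famiso => i; apply: phi_iso; first exact: iso_id.
  by move=> j /Hi [].
apply: cok_of_iso; last exact: HRE.
rewrite -Fm_comp; apply: (@Fm_zero _ _ _ F HF _ _ _ k) => /=.
rewrite /slotin /slotout /upd /=.
case: (k =P k) => [e|nk]; last by exfalso; apply: nk.
rewrite (eq_irrelevance e (erefl k)) /=; exact: cok_zero.
Qed.

Definition Xo (P : 'I_n -> bool) (a c : obfam A) : obfam A :=
  fun i => if P i then c i else a i.
Definition pr (P : 'I_n -> bool) (a c : obfam A) (p : homfam a c) : homfam a (Xo P a c) :=
  fun i => match P i as q return Hom (a i) (if q then c i else a i) with
  | true => p i | false => idm (a i) end.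
Definition st (P Q : 'I_n -> bool) (a c : obfam A) (p : homfam a c)
  : homfam (Xo P a c) (Xo Q a c) :=
  fun i => match P i as q1, Q i as q2
     return Hom (if q1 then c i else a i) (if q2 then c i else a i) with
  | true, true => idm (c i) | true, false => 0
  | false, true => p i | false, false => idm (a i) end.
Definition tt_ (P : 'I_n -> bool) (a b : obfam A) (c : obfam A) (al : homfam b a) k
  : homfam (Xo P (upd a k (b k)) c) (Xo P a c) :=
  fun i => match P i as q
     return Hom (if q then c i else upd a k (b k) i) (if q then c i else a i) with
  | true => idm (c i) | false => slotin (al k) i end.

Lemma pr_st (P Q : 'I_n -> bool) (a c : obfam A) (p : homfam a c) :
  (forall i, P i -> Q i) -> forall i, pr Q p i = comp (pr P p i) (st P Q p i).
Proof.
move=> H i; rewrite /pr /st /Xo; move: (H i).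
case: (P i); case: (Q i) => /= H'; rewrite ?comp_id_l ?comp_id_r //.
by have := H' isT.
Qed.

Lemma st_iso_off (P Q : 'I_n -> bool) (a c : obfam A) (p : homfam a c) i :
  P i = Q i -> is_iso (st P Q p i).
Proof.
rewrite /st /Xo; case: (P i); case: (Q i) => //= _; exact: iso_id.
Qed.

Lemma st_k (P Q : 'I_n -> bool) (a b c : obfam A) (al : homfam b a) (p : homfam a c) k :
  P k = false -> Q k = true -> is_cokernel (al k) (p k) ->
  is_cokernel (tt_ P c al k k) (st P Q p k).
Proof.
rewrite /tt_ /st /Xo; case: (P k); case: (Q k) => //= _ _ H.
rewrite /slotin /upd; case: (k =P k) => [e|nk]; last by exfalso; apply: nk.
by rewrite (eq_irrelevance e (erefl k)) /=.
Qed.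

Lemma tt_iso_off (P : 'I_n -> bool) (a b c : obfam A) (al : homfam b a) k i :
  i != k -> is_iso (tt_ P c al k i).
Proof.
move=> ik; rewrite /tt_ /Xo; case: (P i); first exact: iso_id.
rewrite /slotin /upd; move: ik; case: (k =P i) => [e|_ _]; last exact: iso_id.
by case: i / e; rewrite eqxx.
Qed.

Lemma comm (P : 'I_n -> bool) (a b c : obfam A) (al : homfam b a) (p : homfam a c) k :
  P k = false -> forall i,
  comp (slotin (al k) i) (pr P p i)
  = comp (pr P (psi (u := a) (v := c) (k := k) (d := b k) 0 p) i) (tt_ P c al k i).
Proof.
move=> Pk i; rewrite /pr /tt_ /Xo; case E: (P i); last by rewrite comp_id_l comp_id_r.
rewrite /slotin /psi /upd; move: E; case: (k =P i) => [e|ne].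
  by case: i / e => E; rewrite E in Pk.
by move=> _; rewrite comp_id_l comp_id_r.
Qed.

Lemma claim (s : seq 'I_n) : uniq s -> forall (P : 'I_n -> bool), (forall i, P i = (i \in s)) ->
  forall (a b c : obfam A) (al : homfam b a) (p : homfam a c),
  (forall i, P i -> is_cokernel (al i) (p i)) ->
  epi (Fm F (pr P p)) /\
  forall d (h : Hom (Fo F a) d), (forall j, P j -> comp (Fm F (slotin (al j))) h = 0) ->
    exists u, comp (Fm F (pr P p)) u = h.
Proof.
elim: s => [|k s IH] /=.
  move=> _ P HP a b c al p _.
  have iso : is_iso (Fm F (pr P p)).
    apply: famiso => i; rewrite /pr /Xo; move: (HP i); rewrite in_nil.
    case: (P i) => // _; exact: iso_id.
  split; first by move=> d u u'; exact: iso_epi.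
  move=> d h _; case: iso => v [pv vp]; exists (comp v h).
  by rewrite -comp_assoc pv comp_id_l.
case/andP => ks us P HP a b c al p Hc.
pose P0 := fun i => i \in s.
have HP0 : forall i, P0 i = (i \in s) by [].
have P0k : P0 k = false by exact: negbTE.
have Pk : P k = true by rewrite HP inE eqxx.
have P0P : forall i, P0 i -> P i by move=> i; rewrite HP inE /P0 => ->; rewrite orbT.
have P0Pne : forall i, i != k -> P0 i = P i by move=> i ik; rewrite HP inE (negbTE ik).
have Hc0 : forall i, P0 i -> is_cokernel (al i) (p i) by move=> i /P0P; exact: Hc.
have [epi0 fac0] := IH us P0 HP0 a b c al p Hc0.
pose p' := psi (u := a) (v := c) (k := k) (d := b k) 0 p.
pose al' := phi (u := b) (v := a) (k := k) (d := b k) (idm (b k)) al.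
have Hc' : forall i, P0 i -> is_cokernel (al' i) (p' i).
  move=> i P0i; rewrite /al' /p' /phi /psi /upd; move: P0i; case: (k =P i) => [e|ne].
    by case: i / e; rewrite P0k.
  exact: Hc0.
have [epi' _] := IH us P0 HP0 (upd a k (b k)) b c al' p' Hc'.
have cokst : is_cokernel (Fm F (tt_ P0 c al k)) (Fm F (st P0 P p)).
  apply: (RE_gen (k := k)).
    apply: st_k => //; exact: Hc.
  move=> i ik; split; [exact: tt_iso_off | apply: st_iso_off; exact: P0Pne].
have prE : Fm F (pr P p) = comp (Fm F (pr P0 p)) (Fm F (st P0 P p)).
  apply: Fm_compE => i; exact: pr_st.
split.
  rewrite prE; apply: epi_comp => //; exact: cok_epi' cokst.
move=> d h Hh.
have [u1 Hu1] := fac0 d h (fun j P0j => Hh j (P0P j P0j)).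
have E1 : comp (Fm F (pr P0 p')) (Fm F (tt_ P0 c al k))
          = comp (Fm F (slotin (al k))) (Fm F (pr P0 p)).
  rewrite -(Fm_compE (h := fun i => comp (pr P0 p' i) (tt_ P0 c al k i)) (fun i => erefl)).
  apply: Fm_compE => i; by rewrite comm.
have tu1 : comp (Fm F (tt_ P0 c al k)) u1 = 0.
  apply: (epi' _ _ 0); rewrite comp0r -comp_assoc E1 comp_assoc Hu1; exact: Hh.
case: cokst => _ /(_ d u1 tu1) [u [Hu _]].
exists u; by rewrite prE comp_assoc Hu.
Qed.

End Forward.

Section Main.
Variables (n : nat) (A : 'I_n -> AddCat) (B : AddCat) (F : ProdFunctor A B).
Hypothesis HF : multilinear F.

Lemma forward : right_exact F -> forall (a b : obfam A) (alpha : homfam b a),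
    is_cokernel (first_mor F alpha)
      (Fm F (x := a) (y := fun i => cok (alpha i)) (fun i => cokpi (alpha i))).
Proof.
move=> HRE a b al.
have HP : forall i : 'I_n, (fun _ => true) i = (i \in enum 'I_n) by move=> i; rewrite mem_enum.
have [ep fac] := @claim n A B F HF HRE (enum 'I_n) (enum_uniq _) (fun _ => true) HP
   a b (fun i => cok (al i)) al (fun i => cokpi (al i)) (fun i _ => cok_cokpi (al i)).
rewrite /first_mor; split.
  apply/rowmor0 => j _; rewrite -Fm_comp; apply: (@Fm_zero _ _ _ F HF _ _ _ j) => /=.
  rewrite /slotin /upd; case: (j =P j) => [e|nj]; last by exfalso; apply: nj.
  rewrite (eq_irrelevance e (erefl j)) /=; exact: cok_zero.
move=> d h /rowmor0 Hh.
have [j|u Hu] := fac d h; first by move=> _; apply: Hh; rewrite mem_enum.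
exists u; split; first exact: Hu.
by move=> u' Hu'; apply: ep; rewrite Hu'.
Qed.

Definition alR (x : obfam A) k (c : Ob (A k)) (g : Hom c (x k)) : homfam (upd x k c) x :=
  fun i => if k == i then slotin g i else 0.

Lemma backward : (forall (a b : obfam A) (alpha : homfam b a),
    is_cokernel (first_mor F alpha)
      (Fm F (x := a) (y := fun i => cok (alpha i)) (fun i => cokpi (alpha i)))) ->
  right_exact F.
Proof.
move=> H x k c g.
apply: iso_of_cok.
pose al := alR g.
have P1 : forall i, is_cokernel (al i) (slotout x (cokpi g) i).
  move=> i; rewrite /al /alR /slotin /slotout /upd; case: (k =P i) => [e|ne].
    by case: i / e => /=; exact: cok_cokpi.
  exact: cok_zero_iso.
have Hsl : Fm F (slotout x (cokpi g))
   = comp (Fm F (fun i => cokpi (al i)))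
          (Fm F (fun i => cokdesc (al i) (slotout x (cokpi g) i))).
  apply: Fm_compE => i /=; rewrite cok_fac //; by case: (P1 i).
have Hc := H x (upd x k c) al.
have Hc2 : is_cokernel (first_mor F al) (Fm F (slotout x (cokpi g))).
  rewrite Hsl; apply: cok_post => //; apply: famiso => i; apply: iso_of_cok; exact: P1.
apply: (cok_same _ Hc2) => d h.
rewrite /first_mor rowmor0.
have Z : forall j, j != k -> Fm F (slotin (al j)) = 0.
  move=> j jk; apply: (@Fm_zero _ _ _ F HF _ _ _ j).
  rewrite /slotin /upd; case: (j =P j) => [e|nj]; last by exfalso; apply: nj.
  rewrite (eq_irrelevance e (erefl j)) /= /al /alR.
  by rewrite eq_sym (negbTE jk).
have alk : al k = slotin g k by rewrite /al /alR eqxx.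
have Gk : Fm F (slotin g)
   = comp (Fm F (phi (idm (upd x k c k)) (slotin g))) (Fm F (slotin (al k))).
  rewrite alk; apply: Fm_compE => i; exact: D_pre.
have isoPhi : is_iso (Fm F (phi (idm (upd x k c k)) (slotin g))).
  apply: famiso => i; apply: phi_iso; first exact: iso_id.
  move=> j jk; rewrite /slotin /upd; move: jk; case: (k =P j) => [e|_ _]; last exact: iso_id.
  by case: j / e; rewrite eqxx.
split.
  move=> Hj; rewrite Gk comp_assoc (Hj k) ?mem_enum //; exact: comp0r.
move=> Hg j _; case: (eqVneq j k) => [->|jk]; last by rewrite Z // comp0l.
by move: Hg; rewrite Gk comp_assoc => /(iso_kill _ isoPhi).
Qed.
End Main.

Theorem lemma2p8 (n : nat) (A : 'I_n -> AddCat) (B : AddCat)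
    (F : ProdFunctor A B) (HF : multilinear F) :
  right_exact F <->
  forall (a b : obfam A) (alpha : homfam b a),
    is_cokernel (first_mor F alpha)
                (Fm F (x := a) (y := fun i => cok (alpha i))
                      (fun i => cokpi (alpha i))).
Proof.
split; [exact: forward | exact: backward].
Qed.
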